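(* Let $K=\{x\in\mathbb C:|x|=1\}$ with its Borel $\sigma$-algebra $\mathcal Q$, let $A_1=\{e^{i\varphi}:\varphi\in[0,\pi)\}$, $A_2=\{e^{i\varphi}:\varphi\in[\pi,2\pi)\}$, and let $\Delta=\{1,2\}$ with its power set $\mathcal D$. Fix $a\in K$, let $f:K\to K$, $f(x)=ax$, and $g:K\to\Delta$, $g(x)=k$ for $x\in A_k$. Let $T$ be the generator with $T(x,\cdot)=\delta_{(f(x),g(f(x)))}$. If $a$ is not a root of unity, then $\sigma_Q(T)$ equals the Borel $\sigma$-algebra of $K$.
   Context: A generator $[(Q,\mathcal Q),T,(\Delta,\mathcal D)]$ consists of measurable spaces $(Q,\mathcal Q)$ and $(\Delta,\mathcal D)$ and a Markov transition kernel $T$ from $(Q,\mathcal Q)$ to $(Q\times\Delta,\mathcal Q\otimes\mathcal D)$. $\sigma_Q(T)$ denotes the smallest $\sigma$-subalgebra $\mathcal A$ of $\mathcal Q$ such that for every $C\in\mathcal A\otimes\mathcal D$ the function $x\mapsto T(x,C)$ is $\mathcal A$-measurable. *)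

(* Defs.v *)
From HB Require Import structures.
From mathcomp Require Import all_boot all_order all_algebra.
From mathcomp Require Import all_classical all_reals all_analysis.
Set Implicit Arguments. Unset Strict Implicit. Unset Printing Implicit Defensive.
Import Order.TTheory GRing.Theory Num.Theory.
Local Open Scope classical_set_scope.
Local Open Scope ring_scope.

(* Complex numbers are modelled as pairs (re, im) in R * R; the Borel
   sigma-algebra of C = R^2 is the product Borel sigma-algebra on R * R. *)
Section Circle.
Variable R : realType.

Definition cmul (z w : R * R) : R * R :=
  (z.1 * w.1 - z.2 * w.2, z.1 * w.2 + z.2 * w.1).

Fixpoint cpow (z : R * R) (n : nat) : R * R :=
  if n is n'.+1 then cmul z (cpow z n') else (1, 0).

Definition circ_root_of_unity (z : R * R) : Prop :=
  exists n : nat, (0 < n)%N /\ cpow z n = (1, 0).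

Definition Kset : set (R * R) := [set p | p.1 ^+ 2 + p.2 ^+ 2 = 1].

(* Q = Borel sigma-algebra of K (trace of the Borel sets of C on K) *)
Definition Qsig : set (set (R * R)) :=
  [set B | measurable B /\ B `<=` Kset].

Definition A1 : set (R * R) :=
  [set (cos phi, sin phi) | phi in `[0, pi[%classic].
Definition A2 : set (R * R) :=
  [set (cos phi, sin phi) | phi in `[pi, pi *+ 2[%classic].

Inductive Delta := d1 | d2.

Definition f (a : R * R) (x : R * R) : R * R := cmul a x.

(* g x = k for x in A_k; A1, A2 partition K *)
Definition g (x : R * R) : Delta := if x \in A1 then d1 else d2.

Definition T (a : R * R) (x : R * R) (C : set ((R * R) * Delta)) : R :=
  \1_C (f a x, g (f a x)).

(* product sigma-algebra A (x) D on K x Delta, D = power set of Delta *)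
Definition prod_sigma (A : set (set (R * R))) : set (set ((R * R) * Delta)) :=
  <<s Kset `*` setT,
      [set C | exists X Y, A X /\ C = X `*` Y] >>.

Definition A_measurable (A : set (set (R * R))) (h : R * R -> R) : Prop :=
  forall B : set R, measurable B -> A (Kset `&` (h @^-1` B)).

Definition admissible (a : R * R) (A : set (set (R * R))) : Prop :=
  [/\ sigma_algebra Kset A, A `<=` Qsig &
      forall C, prod_sigma A C -> A_measurable A (fun x => T a x C)].

Definition sigmaQ (a : R * R) : set (set (R * R)) :=
  [set B | forall A, admissible a A -> A B].

End Circle.

(* Main.v *)
Require Import Defs.
From HB Require Import structures.
From mathcomp Require Import all_boot all_order all_algebra.
From mathcomp Require Import all_classical all_reals all_analysis.
From mathcomp Require Import ring lra.
Import Order.TTheory GRing.Theory Num.Theory.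
Local Open Scope classical_set_scope.
Local Open Scope ring_scope.

Definition tp {R : realType} : R := pi *+ 2.
Definition md {R : realType} (x : R) : R :=
  x - (Num.floor (x / tp))%:~R * tp.

Lemma tp_gt0 {R : realType} : 0 < (tp : R).
Proof. by rewrite /tp mulrn_wgt0 // pi_gt0. Qed.

Lemma md_ge0 {R : realType} (x : R) : 0 <= md x.
Proof.
rewrite /md subr_ge0 -ler_pdivlMr ?tp_gt0 //; exact: Num.Theory.floor_le.
Qed.

Lemma md_lt {R : realType} (x : R) : md x < tp.
Proof.
have := Num.Theory.floorD1_gt (x / tp); rewrite /md.
rewrite ltr_pdivrMr ?tp_gt0 // rmorphD /= mulrDl mul1r; lra.
Qed.

Lemma md_id {R : realType} (x : R) : 0 <= x < tp -> md x = x.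
Proof.
move=> /andP[x0 xt]; rewrite /md.
have -> : Num.floor (x / tp) = 0.
  apply: Num.Theory.floor_def; rewrite /= add0r.
  rewrite divr_ge0 ?(ltW tp_gt0) //= ltr_pdivrMr ?tp_gt0 // ?mulr1z mul1r.
  by [].
by rewrite (_ : (0:int)%:~R = 0 :> R) // mul0r subr0.
Qed.

Lemma md_shift {R : realType} (x : R) (z : int) : md (x + z%:~R * tp) = md x.
Proof.
rewrite /md mulrDl mulfK ?(gt_eqF tp_gt0) // Num.Theory.floorDrz ?intr_int //.
rewrite Num.Theory.intrKfloor rmorphD /=; ring.
Qed.

Lemma md_eq {R : realType} (x : R) : exists z : int, md x = x + z%:~R * tp.
Proof. exists (- Num.floor (x / tp)); rewrite /md rmorphN /=; ring. Qed.

Lemma mdDl {R : realType} (x y : R) : md (md x + y) = md (x + y).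
Proof.
have [z ->] := md_eq x.
by rewrite (_ : _ + _ + y = (x + y) + z%:~R * tp) ?md_shift //; ring.
Qed.

Lemma mdBr {R : realType} (x y : R) : md (x - md y) = md (x - y).
Proof.
have [z ->] := md_eq y.
by rewrite (_ : x - _ = (x - y) + (- z)%:~R * tp) ?md_shift // rmorphN /=; ring.
Qed.

Lemma md_neg {R : realType} (x : R) : -tp <= x < 0 -> md x = x + tp.
Proof.
move=> /andP[h1 h2].
rewrite -(md_shift x 1) mulr1z mul1r md_id //; apply/andP; split; lra.
Qed.

Lemma md_opp {R : realType} (x : R) : md x != 0 -> md (- x) = tp - md x.
Proof.
move=> h.
rewrite -(sub0r x) -(mdBr 0) sub0r md_neg; first by lra.
have := md_ge0 x; have := md_lt x; move: h; rewrite neq_lt => /orP[] h *; lra.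
Qed.

Lemma mdMn {R : realType} (j : nat) (y : R) : md (j%:R * y) = md (j%:R * md y).
Proof.
have [z ->] := md_eq y.
rewrite (_ : j%:R * (y + z%:~R * tp) = j%:R * y + (z * j%:Z)%:~R * tp) ?md_shift //.
rewrite intrM /=; ring.
Qed.

Definition e {R : realType} (x : R) : R * R := (cos x, sin x).

Lemma e_Kset {R : realType} (x : R) : Kset (e x).
Proof. by rewrite /Kset /= cos2Dsin2. Qed.

Lemma cmul_e {R : realType} (x y : R) : cmul (e x) (e y) = e (x + y).
Proof. rewrite /cmul /e /= cosD sinD; congr pair; ring. Qed.

Lemma e_natper {R : realType} (x : R) (n : nat) : e (x + n%:R * tp) = e x.
Proof.
by rewrite /e mulr_natl (periodicn (@cosD2pi R)) (periodicn (@sinD2pi R)).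
Qed.

Lemma e_per {R : realType} (x : R) (z : int) : e (x + z%:~R * tp) = e x.
Proof.
case: z => n; first by rewrite e_natper.
rewrite NegzE -(e_natper (x + (- n.+1%:Z)%:~R * tp) n.+1); congr e.
rewrite rmorphN /=; ring.
Qed.

Lemma e_md {R : realType} (x : R) : e (md x) = e x.
Proof. by have [z ->] := md_eq x; rewrite e_per. Qed.

Lemma sin_neg_pi {R : realType} (v : R) : pi < v < tp -> sin v < 0.
Proof.
move=> /andP[h1 h2].
have -> : v = (v - pi) + pi by ring.
rewrite sinDpi oppr_lt0; apply: sin_gt0_pi; apply/andP; split; rewrite /tp in h2; lra.
Qed.

Lemma v_zero {R : realType} (v : R) : 0 <= v < tp -> cos v = 1 -> sin v = 0 -> v = 0.
Proof.
move=> /andP[h0 h1] hc hs.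
have [v0|vp] := eqVneq v 0 => //.
have vgt : 0 < v by rewrite lt_neqAle eq_sym vp.
have [h|h] := ltP v pi.
  by have := @sin_gt0_pi R v; rewrite vgt h hs ltxx => /(_ isT).
have [h'|h'] := eqVneq v pi.
  by move: hc; rewrite h' cospi => /eqP; rewrite -subr_eq0; lra.
have : pi < v by rewrite lt_neqAle eq_sym h' h.
move=> hpv; have := @sin_neg_pi R v; rewrite hpv h1 hs ltxx => /(_ isT) //.
Qed.

Lemma e_inj {R : realType} (x y : R) : e x = e y -> md x = md y.
Proof.
rewrite /e => -[hc hs].
have c1 : cos (x - y) = 1.
  by rewrite cosD cosN sinN hc hs; have := cos2Dsin2 y; rewrite !expr2 => <-; ring.
have s0 : sin (x - y) = 0 by rewrite sinD cosN sinN hc hs; ring.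
have hv : md (x - y) = 0.
  apply: v_zero; first by rewrite md_ge0 md_lt.
  - by have := e_md (x - y); rewrite /e c1 => -[].
  - by have := e_md (x - y); rewrite /e s0 => -[].
have -> : x = (x - y) + y by ring.
by rewrite -mdDl hv add0r.
Qed.

Lemma e_surj {R : realType} (p : R * R) : Kset p -> exists x, p = e x.
Proof.
case: p => p1 p2; rewrite /Kset /= => hp.
have hb : -1 <= p1 <= 1 by apply/andP; split; nra.
have hs : Num.sqrt (1 - p1 ^+ 2) = `|p2| by rewrite (_ : 1 - p1 ^+ 2 = p2 ^+ 2) ?sqrtr_sqr //; rewrite -hp; ring.
have hc : cos (acos p1) = p1 by rewrite acosK // in_itv.
have [p20|p20] := leP 0 p2.
  exists (acos p1); rewrite /e hc sin_acos // hs ger0_norm //.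
exists (- acos p1); rewrite /e cosN sinN hc sin_acos // hs ltr0_norm //; congr pair; ring.
Qed.

Lemma A1_e {R : realType} (x : R) : A1 (e x) <-> md x < pi.
Proof.
split.
  case=> phi; rewrite /= in_itv /= => /andP[h0 h1] he.
  by rewrite -(e_inj phi x he) md_id //; apply/andP; split => //; rewrite /tp; have := pi_gt0 R; lra.
move=> h; exists (md x); first by rewrite /= in_itv /= md_ge0 h.
by have := e_md x.
Qed.

Lemma A1_Kset {R : realType} : @A1 R `<=` @Kset R.
Proof. by move=> _ [phi _ <-]; exact: e_Kset. Qed.

Lemma cpow_e {R : realType} (t : R) (n : nat) : cpow (e t) n = e (n%:R * t).
Proof.
elim: n => [|n IH] /=; first by rewrite mul0r /e cos0 sin0.
by rewrite IH cmul_e mulrSr mulrDl mul1r addrC.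
Qed.

Lemma iter_e {R : realType} (t x : R) (n : nat) :
  iter n (cmul (e t)) (e x) = e (x + n%:R * t).
Proof.
elim: n => [|n IH] /=; first by rewrite mul0r addr0.
by rewrite IH cmul_e; congr e; rewrite mulrSr; ring.
Qed.

Lemma not_root {R : realType} (t : R) :
  ~ circ_root_of_unity (e t) -> forall n, (0 < n)%N -> md (n%:R * t) != 0.
Proof.
move=> hn n n0; apply/eqP => h; apply: hn; exists n; split => //.
rewrite cpow_e -e_md h /e cos0 sin0 //.
Qed.

Lemma md_pos_id {R : realType} (x : R) : 0 <= x -> x < tp -> md x = x.
Proof. by move=> *; apply: md_id; apply/andP. Qed.

Lemma hit {R : realType} (y c eps : R) : 0 < md y -> md y < eps -> 0 <= c ->
  c + eps <= tp -> exists j, (0 < j)%N /\ c < md (j%:R * y) < c + eps.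
Proof.
move=> d0 de c0 ce; set d := md y in d0 de *.
have cd0 : 0 <= c / d by rewrite divr_ge0 // ltW.
have /andP[h1 h2] := Num.Theory.truncn_itv cd0.
set m := Num.trunc (c / d) in h1 h2.
exists m.+1; split => //.
rewrite mdMn -/d.
have h1' : m%:R * d <= c by rewrite -ler_pdivlMr.
have h2' : c < m.+1%:R * d by rewrite -ltr_pdivrMr.
have hS : m.+1%:R * d = m%:R * d + d by rewrite mulrSr mulrDl mul1r.
rewrite md_pos_id; [apply/andP; split|..]; lra.
Qed.

Lemma hit' {R : realType} (y c eps : R) : 0 < md y -> md y < eps -> 0 <= c ->
  c + eps <= tp -> exists j, (0 < j)%N /\ c < md (- (j%:R * y)) < c + eps.
Proof.
move=> d0 de c0 ce.
have [j [j0 /andP[h1 h2]]] := @hit R y (tp - c - eps) eps d0 de ltac:(lra) ltac:(lra).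
exists j; split => //.
rewrite md_opp; last by apply/eqP => h; rewrite h in h1; lra.
apply/andP; split; lra.
Qed.

Lemma pigeon_step {R : realType} (t eps : R) (i j : nat) :
  (forall n, (0 < n)%N -> md (n%:R * t) != 0) -> (i < j)%N ->
  `|md (i%:R * t) - md (j%:R * t)| < eps ->
  exists k, (0 < k)%N /\
    ((0 < md (k%:R * t) < eps) \/ (0 < md (- (k%:R * t)) < eps)).
Proof.
move=> hnr ij hc; exists (j - i)%N; split; first by rewrite subn_gt0.
have hk : (j - i)%N%:R * t = j%:R * t - i%:R * t by rewrite natrB ?(ltnW ij) // mulrBl.
have e1 : md ((j - i)%N%:R * t) = md (md (j%:R * t) - md (i%:R * t)).
  by rewrite hk mdDl mdBr.
have e2 : md (- ((j - i)%N%:R * t)) = md (md (i%:R * t) - md (j%:R * t)).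
  by rewrite hk opprB mdDl mdBr.
have nz := hnr (j - i)%N ltac:(by rewrite subn_gt0).
have := nz; rewrite e1.
have := @md_ge0 R (i%:R * t); have := @md_lt R (i%:R * t).
have := @md_ge0 R (j%:R * t); have := @md_lt R (j%:R * t).
set xi := md (i%:R * t) in hc e1 e2 *; set xj := md (j%:R * t) in hc e1 e2 *.
move=> hj1 hj0 hi1 hi0 nz'.
move: hc; rewrite ltr_norml => /andP[c1 c2].
have [h|h|h] := ltgtP xi xj.
- left; rewrite md_pos_id; [apply/andP; split|..]; lra.
- right; rewrite e2 md_pos_id; [apply/andP; split|..]; lra.
- by move: nz'; rewrite h subrr md_pos_id ?eqxx //; exact: tp_gt0.
Qed.

Lemma pigeon {R : realType} (t : R) :
  (forall n, (0 < n)%N -> md (n%:R * t) != 0) ->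
  forall eps, 0 < eps -> exists k, (0 < k)%N /\
    ((0 < md (k%:R * t) < eps) \/ (0 < md (- (k%:R * t)) < eps)).
Proof.
move=> hnr eps e0.
set N := (Num.trunc (tp / eps)).+1.
have hN : tp < N%:R * eps.
  by rewrite -ltr_pdivrMr // Num.Theory.truncnS_gt.
have N0 : 0 < (N%:R : R) by rewrite ltr0n.
have tp0 := @tp_gt0 R.
have bin_lt : forall i : 'I_N.+1, (Num.trunc (md (i%:R * t) * N%:R / tp) < N)%N.
  move=> i; rewrite Num.Theory.truncn_lt_nat; last first.
    by rewrite divr_ge0 ?mulr_ge0 ?md_ge0 // ltW.
  rewrite ltr_pdivrMr // mulrC ltr_pM2l //; exact: md_lt.
pose bin (i : 'I_N.+1) : 'I_N := Ordinal (bin_lt i).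
have ninj : ~ injective bin.
  by move=> /leq_card; rewrite !card_ord ltnn.
have [i [j [hb hij]]] : exists i j, bin i = bin j /\ i <> j.
  apply: contrapT => hne; apply: ninj => i j hb; apply: contrapT => hij.
  by apply: hne; exists i, j.
have close : `|md (i%:R * t) - md (j%:R * t)| < eps.
  have := congr1 val hb => /= hb'.
  have itv := fun k : 'I_N.+1 => @Num.Theory.truncn_itv _ (md (k%:R * t) * N%:R / tp)
     (divr_ge0 (mulr_ge0 (md_ge0 _) (ltW N0)) (ltW tp0)).
  have /andP[a1 a2] := itv i; have /andP[b1 b2] := itv j.
  rewrite hb' in a1 a2.
  set m := Num.trunc _ in a1 a2 b1 b2.
  have hm : m.+1%:R = m%:R + 1 :> R by rewrite mulrSr.
  set xi := md (i%:R * t) in a1 a2 *; set xj := md (j%:R * t) in b1 b2 *.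
  have a1' : m%:R * tp <= xi * N%:R by rewrite -ler_pdivlMr.
  have a2' : xi * N%:R < m.+1%:R * tp by rewrite -ltr_pdivrMr.
  have b1' : m%:R * tp <= xj * N%:R by rewrite -ler_pdivlMr.
  have b2' : xj * N%:R < m.+1%:R * tp by rewrite -ltr_pdivrMr.
  rewrite hm in a2' b2'.
  rewrite ltr_norml; apply/andP; split; nra.
have hij' : nat_of_ord i != nat_of_ord j by apply/eqP => /val_inj.
case: (ltngtP i j) => [h|h|h]; last by rewrite h eqxx in hij'.
- exact: pigeon_step h close.
- by apply: pigeon_step h _ => //; rewrite distrC.
Qed.

Lemma density {R : realType} (t : R) :
  (forall n, (0 < n)%N -> md (n%:R * t) != 0) ->
  forall c eps, 0 <= c -> 0 < eps -> c + eps <= tp ->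
  exists k, (0 < k)%N /\ c < md (- (k%:R * t)) < c + eps.
Proof.
move=> hnr c eps c0 e0 ce.
have [k0 [k00 [/andP[h1 h2]|/andP[h1 h2]]]] := pigeon t hnr eps e0.
- have [j [j0 hj]] := hit' _ _ _ h1 h2 c0 ce.
  exists (j * k0)%N; split; first by rewrite muln_gt0 j0.
  by rewrite natrM -mulrA.
- have [j [j0 hj]] := hit _ _ _ h1 h2 c0 ce.
  exists (j * k0)%N; split; first by rewrite muln_gt0 j0.
  by rewrite natrM -mulrA -mulrN.
Qed.

Definition W {R : realType} (S : set R) : set (R * R) :=
  [set x | exists phi, x = e phi /\ S (md phi)].

Lemma W_sub {R : realType} (S : set R) : W S `<=` @Kset R.
Proof. by move=> _ [phi [-> _]]; exact: e_Kset. Qed.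

Lemma W_mem {R : realType} (S : set R) phi : W S (e phi) <-> S (md phi).
Proof.
split; last by move=> h; exists phi.
by case=> psi [/e_inj -> h].
Qed.

Lemma W_ext {R : realType} (S S' : set R) :
  (forall u, 0 <= u < tp -> (S u <-> S' u)) -> W S = W S'.
Proof.
move=> h; apply/seteqP; split => _ [phi [-> hp]]; exists phi; split => //;
  by apply/h => //; rewrite md_ge0 md_lt.
Qed.

Lemma W0 {R : realType} : W (set0 : set R) = set0.
Proof. by apply/seteqP; split => // _ [phi [_ []]]. Qed.

Lemma WC {R : realType} (S : set R) : W (~` S) = @Kset R `\` W S.
Proof.
apply/seteqP; split.
  move=> _ [phi [-> hp]]; split; first exact: e_Kset.
  by move/W_mem.
move=> x [/e_surj [phi ->] hn]; exists phi; split => // hs; apply: hn.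
by apply/W_mem.
Qed.

Lemma WU {R : realType} (S : nat -> set R) :
  W (\bigcup_n S n) = \bigcup_n W (S n).
Proof.
apply/seteqP; split.
  by move=> _ [phi [-> [n _ hn]]]; exists n => //; exists phi.
by move=> _ [n _ [phi [-> hn]]]; exists phi; split => //; exists n.
Qed.

Lemma saT {T} (D : set T) (G : set (set T)) : sigma_algebra D G -> G D.
Proof. by case=> h0 hC _; rewrite -(setD0 D); exact: hC. Qed.

Lemma saU {T} (D : set T) (G : set (set T)) X Y : sigma_algebra D G ->
  G X -> G Y -> G (X `|` Y).
Proof.
case=> h0 hC hU gx gy; have := hU (bigcup2 X Y); rewrite bigcup2E; apply; case=> [|[|n]] //=.
Qed.

Lemma saCT {T} (G : set (set T)) X : sigma_algebra setT G -> G X -> G (~` X).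
Proof. by case=> h0 hC _ gx; rewrite -setTD; exact: hC. Qed.

Lemma saIT {T} (G : set (set T)) X Y : sigma_algebra setT G ->
  G X -> G Y -> G (X `&` Y).
Proof.
move=> hs gx gy; rewrite -(setCK (X `&` Y)) setCI.
exact: (saCT _ _ hs (saU _ _ _ _ hs (saCT _ _ hs gx) (saCT _ _ hs gy))).
Qed.

Arguments saT {T D G}. Arguments saU {T D G X Y}.
Arguments saCT {T G X}. Arguments saIT {T G X Y}.

Lemma T_pre1 {R : realType} (a : R * R) C :
  @Kset R `&` (fun x => T a x C) @^-1` [set 1] =
  @Kset R `&` [set x | C (f a x, g (f a x))].
Proof.
apply/seteqP; split => x [kx h]; split => //; move: h; rewrite /T /indic /=.
  case: (boolP (_ \in C)) => hc /=; first by rewrite inE in hc.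
  by move/eqP; rewrite eq_sym oner_eq0.
by move=> hc; rewrite mem_set.
Qed.

Lemma Kset_cmul {R : realType} (a x : R * R) : Kset a -> Kset x -> Kset (cmul a x).
Proof.
case: a => a1 a2; case: x => x1 x2; rewrite /Kset /cmul /= => ha hx.
have -> : (a1 * x1 - a2 * x2) ^+ 2 + (a1 * x2 + a2 * x1) ^+ 2 =
  (a1 ^+ 2 + a2 ^+ 2) * (x1 ^+ 2 + x2 ^+ 2) by ring.
by rewrite ha hx mul1r.
Qed.

Lemma g_d1 {R : realType} (y : R * R) : g y = d1 <-> A1 y.
Proof.
rewrite /g; case: (boolP (y \in @A1 R)) => h; first by rewrite inE in h.
by split => // hy; move: h; rewrite mem_set.
Qed.

Lemma rot_closed {R : realType} (a : R * R) A X : admissible a A -> A X ->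
  A (@Kset R `&` [set x | X (cmul a x)]).
Proof.
case=> hsa hsub hm hX.
have hC : prod_sigma A (X `*` setT).
  by apply: sub_sigma_algebra; exists X, setT.
have := hm _ hC [set 1] (measurable_set1 1); rewrite T_pre1.
congr A; apply/seteqP; split => x [kx h]; split => //.
by move: h => [].
Qed.

Lemma A1rot {R : realType} (a : R * R) A : admissible a A ->
  A (@Kset R `&` [set x | A1 (cmul a x)]).
Proof.
move=> hadm; case: (hadm) => hsa hsub hm.
have hC : prod_sigma A (@Kset R `*` [set d1]).
  by apply: sub_sigma_algebra; exists (@Kset R), [set d1]; split => //; exact: saT hsa.
have := hm _ hC [set 1] (measurable_set1 1); rewrite T_pre1.
congr A; apply/seteqP; split => x [kx h]; split => //.
  by move: h => [_ /= /g_d1].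
split => /=; [exact: A1_Kset|exact/g_d1].
Qed.

Lemma Qn_closed {R : realType} (a : R * R) A (n : nat) : Kset a -> admissible a A ->
  A (@Kset R `&` [set x | A1 (iter n.+1 (cmul a) x)]).
Proof.
move=> ka hadm; elim: n => [|n IH]; first exact: A1rot.
have := rot_closed _ _ _ hadm IH; congr A; apply/seteqP; split => x [kx h]; split => //.
  by move: h => [_ /=]; rewrite -iterSr.
by split; [exact: Kset_cmul|move: h => /= h; rewrite -iterSr].
Qed.

Lemma Qn_W {R : realType} (t : R) (k : nat) :
  @Kset R `&` [set x | A1 (iter k (cmul (e t)) x)] =
  W [set u | md (u + k%:R * t) < pi].
Proof.
apply/seteqP; split.
  move=> x [/e_surj [phi ->]]; rewrite /= iter_e => /A1_e h.
  by exists phi; split => //=; rewrite mdDl.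
move=> _ [phi [-> h]]; split; first exact: e_Kset.
by rewrite /= iter_e; apply/A1_e; move: h; rewrite /= mdDl.
Qed.

Lemma Sig_sa {R : realType} {A : set (set (R * R))} :
  sigma_algebra (@Kset R) A -> sigma_algebra setT (fun S : set R => A (W S)).
Proof.
case=> h0 hC hU; split => /=.
- by rewrite W0.
- by move=> S hs; rewrite setTD WC; exact: hC.
- by move=> S hs; rewrite WU; exact: hU.
Qed.

Lemma md_case {R : realType} (w : R) : -tp <= w < tp ->
  (0 <= w /\ md w = w) \/ (w < 0 /\ md w = w + tp).
Proof.
move=> /andP[h1 h2]; have [h|h] := leP 0 w.
  by left; split => //; exact: md_pos_id.
by right; split => //; apply: md_neg; apply/andP.
Qed.

Lemma Sn_eq {R : realType} (t u : R) (k : nat) :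
  md (u + k%:R * t) = md (md u - md (- (k%:R * t))).
Proof. by rewrite mdBr opprK mdDl. Qed.

Lemma O_sig {R : realType} (t : R) (A : set (set (R * R))) :
  sigma_algebra (@Kset R) A ->
  (forall k, (0 < k)%N -> A (W [set u | md (u + k%:R * t) < pi])) ->
  (forall n, (0 < n)%N -> md (n%:R * t) != 0) ->
  forall r, 0 < r -> r <= tp -> A (W [set u | 0 < md u < r]).
Proof.
move=> hsa hS hnr r r0 rtp.
have hSig := Sig_sa hsa.
have pi0 := pi_gt0 R.
have tpE : (tp : R) = pi + pi by rewrite /tp mulr2n.
pose cond n m := 0 < md (- (n.+1%:R * t)) /\ md (- (n.+1%:R * t)) < md (- (m.+1%:R * t)) /\
   md (- (m.+1%:R * t)) < r /\ md (- (m.+1%:R * t)) - md (- (n.+1%:R * t)) < pi.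
pose Y n m := [set u | cond n m /\ md (u + n.+1%:R * t) < pi /\ ~ md (u + m.+1%:R * t) < pi].
have hY : forall n m, A (W (Y n m)).
  move=> n m; case: (pselect (cond n m)) => hc.
    have -> : Y n m = [set u | md (u + n.+1%:R * t) < pi] `&` ~` [set u | md (u + m.+1%:R * t) < pi].
      by apply/seteqP; split => u; rewrite /Y /=; tauto.
    have := saIT hSig (hS n.+1 isT) (saCT hSig (hS m.+1 isT)); exact.
  have -> : Y n m = set0 by apply/seteqP; split => u // [].
  by case: hSig.
have -> : [set u | 0 < md u < r] = \bigcup_n \bigcup_m Y n m.
  apply/seteqP; split => u /=.
    move=> /andP[v0 vr].
    have v1 : md u < tp := md_lt u.
    set v := md u in v0 vr v1 *.
    set eps := Num.min (v / 2) (Num.min ((r - v) / 2) (pi / 2)).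
    have e1 : eps <= v / 2 by rewrite ge_min lexx.
    have e2 : eps <= (r - v) / 2 by rewrite ge_min ge_min lexx orbT.
    have e3 : eps <= pi / 2 by rewrite ge_min ge_min lexx !orbT.
    have e0 : 0 < eps.
      by rewrite !lt_min; apply/andP; split; [|apply/andP; split]; lra.
    have [k1 [k10 /andP[h1 h2]]] := density t hnr (v - eps) eps ltac:(lra) e0 ltac:(lra).
    have [k2 [k20 /andP[h3 h4]]] := density t hnr v eps (ltW v0) e0 ltac:(lra).
    exists k1.-1 => //; exists k2.-1 => //.
    rewrite /Y /cond /= !prednK // !Sn_eq -/v.
    have := @md_lt R (- (k1%:R * t)); have := @md_ge0 R (- (k1%:R * t)).
    have := @md_lt R (- (k2%:R * t)); have := @md_ge0 R (- (k2%:R * t)).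
    set s1 := md (- (k1%:R * t)) in h1 h2 *; set s2 := md (- (k2%:R * t)) in h3 h4 *.
    move=> a1 a2 a3 a4.
    have [[w1 ->]|[w1 ->]] := @md_case R (v - s1) ltac:(apply/andP; split; lra);
    have [[w2 ->]|[w2 ->]] := @md_case R (v - s2) ltac:(apply/andP; split; lra);
    (split; [split; [|split; [|split]]|split]); lra.
  move=> [n _ [m _ [[c1 [c2 [c3 c4]]] [hs1 hs2]]]].
  move: hs1 hs2; rewrite !Sn_eq.
  have := @md_lt R u; have := @md_ge0 R u.
  set v := md u.
  have := @md_lt R (- (n.+1%:R * t)); have := @md_lt R (- (m.+1%:R * t)).
  set s1 := md (- (n.+1%:R * t)) in c1 c2 c3 c4 *; set s2 := md (- (m.+1%:R * t)) in c2 c3 c4 *.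
  move=> a1 a2 v0 v1.
  have [[w1 ->]|[w1 ->]] := @md_case R (v - s1) ltac:(apply/andP; split; lra);
  have [[w2 ->]|[w2 ->]] := @md_case R (v - s2) ltac:(apply/andP; split; lra);
  move=> h1 h2; (apply/andP; split); lra.
have [_ _ hU] := hSig; apply: (hU) => n; apply: (hU) => m; exact: hY.
Qed.

Lemma ray_sig {R : realType} (t : R) (A : set (set (R * R))) :
  sigma_algebra (@Kset R) A ->
  (forall k, (0 < k)%N -> A (W [set u | md (u + k%:R * t) < pi])) ->
  (forall n, (0 < n)%N -> md (n%:R * t) != 0) ->
  forall r, A (W [set u | u < r]).
Proof.
move=> hsa hS hnr r.
have hSig := Sig_sa hsa.
have [r0|r0] := leP r 0.
  rewrite (@W_ext R _ set0); first by case: hSig.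
  by move=> u /andP[u0 ut]; split => // /=; lra.
have [rt|rt] := ltP tp r.
  rewrite (@W_ext R _ (~` set0)); first by apply: (@saCT _ _ set0 hSig); case: hSig.
  by move=> u /andP[u0 ut]; split => // /= _; lra.
rewrite (@W_ext R _ (~` [set u | 0 < md u < tp] `|` [set u | 0 < md u < r])).
  apply: (saU hSig).
    apply: (saCT hSig); exact: O_sig hsa hS hnr _ tp_gt0 (lexx _).
  exact: O_sig hsa hS hnr _ r0 rt.
move=> u hu; rewrite /= md_id //; move: hu => /andP[u0 ut].
have [u0'|u0'] := eqVneq u 0.
  by rewrite u0' ltxx /=; split => // _; left => -[].
have up : 0 < u by rewrite lt_neqAle eq_sym u0' u0.
rewrite up /=; split.
  by move=> ur; right; lra.
by case=> h; [exfalso; apply: h; lra|lra].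
Qed.

Lemma borel_sig {R : realType} (t : R) (A : set (set (R * R))) :
  sigma_algebra (@Kset R) A ->
  (forall k, (0 < k)%N -> A (W [set u | md (u + k%:R * t) < pi])) ->
  (forall n, (0 < n)%N -> md (n%:R * t) != 0) ->
  forall X : set R, measurable X -> A (W X).
Proof.
move=> hsa hS hnr X mX.
have E : @measurable _ R = <<s (@measurable_realfun.RGenInftyO.G R) >> :=
  measurable_realfun.RGenInftyO.measurableE R.
rewrite E in mX; move: mX.
apply: (smallest_sub (Sig_sa hsa)) => _ [x ->].
have -> : `]-oo, x[%classic = [set u : R | u < x].
  by apply/seteqP; split => u /=; rewrite in_itv.
exact: ray_sig hsa hS hnr x.
Qed.

Lemma cos_md {R : realType} (x : R) : cos (md x) = cos x.
Proof. by have := e_md x; rewrite /e => -[]. Qed.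
Lemma sin_md {R : realType} (x : R) : sin (md x) = sin x.
Proof. by have := e_md x; rewrite /e => -[]. Qed.

Lemma main_incl {R : realType} (a : R * R) (A : set (set (R * R))) :
  Kset a -> ~ circ_root_of_unity a -> admissible a A -> @Qsig R `<=` A.
Proof.
move=> ka hr hadm.
have [t ha] := e_surj _ ka; subst a.
have hnr := not_root t hr.
have hsa : sigma_algebra (@Kset R) A by case: hadm.
have hS : forall k, (0 < k)%N -> A (W [set u | md (u + k%:R * t) < pi]).
  by case=> // k _; rewrite -Qn_W; exact: Qn_closed.
have hF : sigma_algebra setT (fun B => A (@Kset R `&` B)).
  case: hsa => h0 hC hU; split => /=.
  - by rewrite setI0.
  - move=> B hB; rewrite (_ : _ `&` _ = @Kset R `\` (@Kset R `&` B)); first exact: hC.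
    by apply/seteqP; split => x /=; tauto.
  - by move=> B hB; rewrite setI_bigcupr; exact: hU.
have hmeas : forall B : set (R * R), measurable B -> A (@Kset R `&` B).
  move=> B; apply: (smallest_sub hF) => _ [] [X mX <-].
  - rewrite (_ : _ `&` _ = W (setT `&` cos @^-1` X)).
      apply: (borel_sig t A hsa hS hnr).
      have mc := measurable_realfun.continuous_measurable_fun (@continuous_cos R); exact: mc measurableT _ mX.
    apply/seteqP; split.
      by move=> x [/e_surj [phi ->] [_ hX]]; exists phi; split => //; rewrite /= cos_md.
    by move=> _ [phi [-> [_ hX]]]; split; [exact: e_Kset|split => //; rewrite /= -cos_md].
  - rewrite (_ : _ `&` _ = W (setT `&` sin @^-1` X)).
      apply: (borel_sig t A hsa hS hnr).
      have mc := measurable_realfun.continuous_measurable_fun (@continuous_sin R); exact: mc measurableT _ mX.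
    apply/seteqP; split.
      by move=> x [/e_surj [phi ->] [_ hX]]; exists phi; split => //; rewrite /= sin_md.
    by move=> _ [phi [-> [_ hX]]]; split; [exact: e_Kset|split => //; rewrite /= -sin_md].
move=> B [mB BK]; rewrite -(setIidr BK); exact: hmeas.
Qed.

Lemma mfun_lin {R : realType} (c1 c2 : R) (h1 h2 : R * R -> R) :
  measurable_fun setT h1 -> measurable_fun setT h2 ->
  measurable_fun setT (fun x : R * R => c1 * h1 x + c2 * h2 x).
Proof.
move=> m1 m2.
apply: (@measurable_realfun.measurable_funD _ _ _ _ (fun x => c1 * h1 x) (fun x => c2 * h2 x)).
  exact: (@measurable_realfun.measurable_funM _ _ _ _ (cst c1) h1 (measurable_cst _) m1).
exact: (@measurable_realfun.measurable_funM _ _ _ _ (cst c2) h2 (measurable_cst _) m2).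
Qed.

Lemma measurable_cmul {R : realType} (a : R * R) :
  measurable_fun setT (cmul a).
Proof.
rewrite (_ : cmul a = fun x => (a.1 * x.1 + (- a.2) * x.2, a.1 * x.2 + a.2 * x.1)).
  apply: measurable_fun_pair.

- exact: mfun_lin _ _ _ _ measurable_fst measurable_snd.
- exact: mfun_lin _ _ _ _ measurable_snd measurable_fst.
by apply/funext => x; rewrite /cmul mulNr.
Qed.

Lemma measurable_Kset {R : realType} : measurable (@Kset R).
Proof.
have m : measurable_fun setT (fun x : R * R => x.1 * x.1 + x.2 * x.2).
  apply: (@measurable_realfun.measurable_funD _ _ _ _ (fun x : R * R => x.1 * x.1) (fun x : R * R => x.2 * x.2)).
    exact: (@measurable_realfun.measurable_funM _ _ _ _ fst fst measurable_fst measurable_fst).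
  exact: (@measurable_realfun.measurable_funM _ _ _ _ snd snd measurable_snd measurable_snd).
have := m measurableT _ (measurable_set1 1); congr measurable.
by apply/seteqP; split => x; rewrite /Kset /= !expr2 => //; case.
Qed.

Lemma A1_char {R : realType} (p : R * R) :
  A1 p <-> Kset p /\ (0 < p.2 \/ p = (1, 0)).
Proof.
have pi0 := pi_gt0 R.
split.
  move=> hp; have kp := A1_Kset _ hp; split => //.
  have [phi ephi] := e_surj _ kp; subst p.
  move/A1_e: hp; rewrite -e_md.
  have := @md_ge0 R phi; set v := md phi => v0 vp.
  have [->|vn] := eqVneq v 0; first by right; rewrite /e cos0 sin0.
  left; apply: sin_gt0_pi; rewrite vp andbT lt_neqAle eq_sym vn v0 //.
case=> kp h; have [phi ephi] := e_surj _ kp; subst p; apply/A1_e.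
case: h => h.
  move: h; rewrite /= -sin_md.
  have := @md_ge0 R phi; have := @md_lt R phi; set v := md phi => v1 v0 hs.
  rewrite ltNge; apply/negP => vp.
  have [ve|vne] := eqVneq v pi; first by move: hs; rewrite ve sinpi ltxx.
  have hv : pi < v by rewrite lt_neqAle eq_sym vne vp.
  have := @sin_neg_pi R v; rewrite hv v1 => /(_ isT); lra.
have := e_inj phi 0; rewrite /e cos0 sin0 => /(_ h) ->.
by rewrite md_pos_id // tp_gt0.
Qed.

Lemma measurable_A1 {R : realType} : measurable (@A1 R).
Proof.
rewrite (_ : @A1 R = @Kset R `&` ((setT `&` snd @^-1` `]0, +oo[%classic) `|`
   ((setT `&` fst @^-1` [set 1]) `&` (setT `&` snd @^-1` [set 0])))).
  apply: measurableI; first exact: measurable_Kset.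
  apply: measurableU; first exact: measurable_snd measurableT _ (measurable_itv _).
  apply: measurableI; [exact: measurable_fst measurableT _ (measurable_set1 1)|
    exact: measurable_snd measurableT _ (measurable_set1 0)].
apply/seteqP; split => p.
  move=> /A1_char [kp h]; split => //; case: h => h; [left|right].
    by split => //=; rewrite in_itv /= h.
  by rewrite h.
case=> kp h; apply/A1_char; split => //; case: h => h; [left|right].
  by case: h => _; rewrite /= in_itv /= andbT.
by case: p kp h => p1 p2 kp [[_ /= ->] [_ /= ->]].
Qed.

Lemma const_meas {R : realType} (P : Prop) : measurable [set _ : R * R | P].
Proof.
case: (pselect P) => hP.
  by rewrite (_ : [set _ | P] = setT) //; apply/seteqP; split.
by rewrite (_ : [set _ | P] = set0) //; apply/seteqP; split.
Qed.

Lemma g_cases {R : realType} (y : R * R) (Y : set Delta) :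
  Y (g y) <-> (A1 y /\ Y d1) \/ (~ A1 y /\ Y d2).
Proof.
rewrite /g; case: (boolP (y \in @A1 R)) => h.
  by rewrite inE in h; split; [left|case; case].
have h' : ~ A1 y by move=> hy; move: h; rewrite mem_set.
by split; [right|case; case].
Qed.

Lemma D_meas {R : realType} (a : R * R) : Kset a -> forall C, prod_sigma (@Qsig R) C ->
  measurable (@Kset R `&` [set x | C (f a x, g (f a x))]).
Proof.
move=> ka; apply: smallest_sub => /=.
  split.
  - by rewrite (_ : _ `&` _ = set0) //; apply/seteqP; split => x // [].
  - move=> C hC; rewrite (_ : _ `&` _ = @Kset R `\` (@Kset R `&` [set x | C (f a x, g (f a x))])).
      exact: measurableD measurable_Kset hC.
    apply/seteqP; split => x /=.
      by case=> kx [[_ _] nc]; split => // -[].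
    by case=> kx nc; split => //; split; [split => //; exact: Kset_cmul|move=> hc; apply: nc].
  - move=> C hC; rewrite (_ : _ `&` _ = \bigcup_n (@Kset R `&` [set x | C n (f a x, g (f a x))])).
      exact: bigcupT_measurable.
    apply/seteqP; split => x /=.
      by case=> kx [n _ hn]; exists n.
    by case=> n _ [kx hn]; split => //; exists n.
move=> _ [X [Y [[mX _] ->]]].
have mrot := @measurable_cmul R a.
rewrite (_ : _ `&` _ = @Kset R `&` (setT `&` cmul a @^-1` X) `&`
  (((setT `&` cmul a @^-1` @A1 R) `&` [set _ | Y d1]) `|`
   ((~` (setT `&` cmul a @^-1` @A1 R)) `&` [set _ | Y d2]))).
  apply: measurableI; first exact: measurableI measurable_Kset (mrot measurableT _ mX).
  apply: measurableU; apply: measurableI; try exact: const_meas.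
    exact: mrot measurableT _ measurable_A1.
  apply: measurableC; exact: (mrot measurableT _ measurable_A1).
apply/seteqP; split => x /=.
  case=> kx [hX /g_cases hY]; split; first by split.
  by case: hY => -[h1 h2]; [left|right] => //; split => // -[].
case=> -[kx [_ hX]] h; split => //; split => //; apply/g_cases.
by case: h => -[h1 h2]; [left; case: h1|right; split => // hA; apply: h1].
Qed.

Lemma Qsig_adm {R : realType} (a : R * R) : Kset a -> admissible a (@Qsig R).
Proof.
move=> ka; split => //.
- split.
  + by split => //; exact: measurable0.
  + move=> B [mB _]; split; first exact: measurableD measurable_Kset mB.
    by move=> x [].
  + move=> B hB; split; first by apply: bigcupT_measurable => n; case: (hB n).
    by move=> x [n _ hn]; case: (hB n) => _; apply.
- move=> C hC B mB; split; last by move=> x [].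
  have mD := D_meas _ ka _ hC.
  rewrite (_ : _ `&` _ = ((@Kset R `&` [set x | C (f a x, g (f a x))]) `&` [set _ | B 1]) `|`
     ((@Kset R `\` (@Kset R `&` [set x | C (f a x, g (f a x))])) `&` [set _ | B 0])).
    apply: measurableU; apply: measurableI; try exact: const_meas.
      exact: mD.
    exact: measurableD measurable_Kset mD.
  apply/seteqP; split => x /=.
    case=> kx; rewrite /T /indic; case: (boolP (_ \in C)) => hc hb.
      by left; split => //; split => //; rewrite inE in hc.
    right; split => //; split => // -[_ hc']; move: hc; rewrite mem_set //.
  move=> /= [[[kx hc] hb]|[[kx hnc] hb]]; split => //; rewrite /T /indic.
    by rewrite mem_set.
  by rewrite memNset //; move=> hc; apply: hnc.
Qed.

Theorem mainTheorem11 (R : realType) (a : R * R) :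
  Kset a -> ~ circ_root_of_unity a -> sigmaQ a = @Qsig R.
Proof.
move=> ka hr; apply/seteqP; split.
  by move=> B hB; exact: hB _ (Qsig_adm _ ka).
by move=> B hB A hA; exact: main_incl _ _ ka hr hA B hB.
Qed.
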